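(* For any register $\bar q$, projectors $P,Q$ on $\mathcal{H}_{\bar q}$ and program $S$: if $\vdash_{\textsc{Wpc}}[P,Q]_{\bar q}\sqsubseteq S$ or $\vdash_{\textsc{Spc}}[P,Q]_{\bar q}\sqsubseteq S$, then $\models\{P\}S\{Q\}$.
   Context: Setting. $V$ finite set of qubit variables, $\mathcal{H}_W=\bigotimes_{q\in W}\mathcal{H}_q$, $\mathcal{H}_q\cong\mathbb{C}^2$ with basis $\{|0\rangle,|1\rangle\}$; operators on subsystems identified with their extension by identity. Projectors identified with subspaces; $\sqsubseteq$ inclusion; $\wedge,\vee$ meet and join; $P^\perp$ orthocomplement; $I$, $0$ top and bottom. Sasaki implication $P\rightsquigarrow Q=P^\perp\vee(P\wedge Q)$, Sasaki conjunction $P\Cap Q=P\wedge(P^\perp\vee Q)$. $\lceil A\rceil$ support of positive $A$; $E(M)$ eigenspace of $M$ for eigenvalue $1$ ($0$ if none); $\mathrm{tr}_{\bar q}$ partial trace. $\rho\models P$ iff $\lceil\rho\rceil\subseteq P$. Programs $S::=\mathbf{skip}\mid\mathbf{abort}\mid \bar q:=0\mid \bar q \mathrel{*}= U\mid \mathbf{assert}\ P[\bar q]\mid [P,Q]_{\bar q}\mid S_0\oplus_p S_1\mid S_0;S_1\mid \mathbf{if}\ P[\bar q]\ \mathbf{then}\ S_1\ \mathbf{else}\ S_0\ \mathbf{end}\mid \mathbf{while}\ P[\bar q]\ \mathbf{do}\ S\ \mathbf{end}$ with denotations (sets of super-operators): $\{\mathrm{id}\}$, $\{0\}$, $\{\rho\mapsto\sum_i|0\rangle_{\bar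 q}\langle i|\rho|i\rangle_{\bar q}\langle 0|\}$, $\{\rho\mapsto U\rho U^\dagger\}$, $\{\rho\mapsto P\rho P\}$, $\{\mathcal{E}$ completely positive trace-nonincreasing on $\mathcal{H}_{\bar q}:\forall\rho\models P,\mathcal{E}(\rho)\models Q\}$, $\{p\mathcal{E}_0+(1-p)\mathcal{E}_1\}$, $\{\mathcal{E}_1\circ\mathcal{E}_0\}$, $\{\mathcal{E}_1\circ\mathcal{P}+\mathcal{E}_0\circ\mathcal{P}^\perp\}$, $\{\sum_{k\ge0}\mathcal{P}^\perp\circ\mathcal{E}_k\circ\mathcal{P}\circ\cdots\circ\mathcal{E}_1\circ\mathcal{P}\}$ respectively, where $\mathcal{E}_i\in\llbracket S_i\rrbracket$ (resp. $\llbracket S\rrbracket$) are chosen independently, $\mathcal{P}(\rho)=P\rho P$, $\mathcal{P}^\perp(\rho)=P^\perp\rho P^\perp$. $\models\{P\}S\{Q\}$ iff for all partial density operators $\rho$ on $\mathcal{H}_V$ and $\mathcal{E}\in\llbracket S\rrbracket$, $\rho\models P\Rightarrow\mathcal{E}(\rho)\models Q$. $S\sqsubseteq S'$ (refinement) iff for all projectors $P,Q$, $\models\{P\}S\{Q\}\Rightarrow\models\{P\}S'\{Q\}$; $S\equiv S'$ iff both directions. Rules (all schematic in programs, registers, projectors on the relevant register, $p$): Structural: $S\equiv S$; from $S_0\sqsubseteq S_1$ and $S_1\sqsubseteq S_2$ infer $S_0\sqsubseteq S_2$; from $S_0\sqsubseteq T_0$, $S_1\sqsubseteq T_1$ infer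 $S_0;S_1\sqsubseteq T_0;T_1$, $S_0\oplus_pS_1\sqsubseteq T_0\oplus_pT_1$, and $\mathbf{if}\ P[\bar q]\ \mathbf{then}\ S_1\ \mathbf{else}\ S_0\ \mathbf{end}\sqsubseteq\mathbf{if}\ P[\bar q]\ \mathbf{then}\ T_1\ \mathbf{else}\ T_0\ \mathbf{end}$; from $S\sqsubseteq T$ infer $\mathbf{while}\ P[\bar q]\ \mathbf{do}\ S\ \mathbf{end}\sqsubseteq\mathbf{while}\ P[\bar q]\ \mathbf{do}\ T\ \mathbf{end}$. Common: $[0,Q]_{\bar q}\sqsubseteq S$; $[P,I]_{\bar q}\sqsubseteq S$; $[P,Q]_{\bar q}\sqsubseteq\mathbf{abort}$; $[P,P]_{\bar q}\sqsubseteq\mathbf{skip}$; $[P,Q]_{\bar q}\sqsubseteq[R,T]_{\bar q}$ if $P\sqsubseteq R$ and $T\sqsubseteq Q$; $[P,Q]_{\bar q}\sqsubseteq[P,R]_{\bar q};[R,Q]_{\bar q}$. Wpc rules: $[E(\langle0|_{\bar q}Q|0\rangle_{\bar q}),Q]_{\bar q}\sqsubseteq\bar q:=0$; $[U^\dagger_{\bar q}QU_{\bar q},Q]_{\bar q}\sqsubseteq\bar q\mathrel{*}=U$; $[P\rightsquigarrow Q,Q]_{\bar q}\sqsubseteq\mathbf{assert}\ P[\bar q]$; $[P,Q]_{\bar q}\equiv[P_1,Q]_{\bar q}\oplus_p[P_2,Q]_{\bar q}$ if $0<p<1$ and $P=P_1\wedge P_2$; $[(P\rightsquigarrow P_1)\wedge(P^\perp\rightsquigarrow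 P_0),Q]_{\bar q}\equiv\mathbf{if}\ P[\bar q]\ \mathbf{then}\ [P_1,Q]_{\bar q}\ \mathbf{else}\ [P_0,Q]_{\bar q}\ \mathbf{end}$; $[(P\rightsquigarrow Q)\wedge(P^\perp\rightsquigarrow R),R]_{\bar q}\sqsubseteq\mathbf{while}\ P[\bar q]\ \mathbf{do}\ [Q,(P\rightsquigarrow Q)\wedge(P^\perp\rightsquigarrow R)]_{\bar q}\ \mathbf{end}$. Spc rules: $[P,|0\rangle_{\bar q}\langle0|\otimes\lceil\mathrm{tr}_{\bar q}(P)\rceil]_{\bar q}\sqsubseteq\bar q:=0$; $[P,U_{\bar q}PU^\dagger_{\bar q}]_{\bar q}\sqsubseteq\bar q\mathrel{*}=U$; $[P,Q\Cap P]_{\bar q}\sqsubseteq\mathbf{assert}\ Q[\bar q]$; $[P,Q]_{\bar q}\equiv[P,Q_1]_{\bar q}\oplus_p[P,Q_2]_{\bar q}$ if $0<p<1$ and $Q_1\vee Q_2=Q$; $[P,Q]_{\bar q}\sqsubseteq\mathbf{if}\ R[\bar q]\ \mathbf{then}\ [R\Cap P,Q]_{\bar q}\ \mathbf{else}\ [R^\perp\Cap P,Q]_{\bar q}\ \mathbf{end}$; $[Inv,P^\perp\Cap Inv]_{\bar q}\sqsubseteq\mathbf{while}\ P[\bar q]\ \mathbf{do}\ [P\Cap Inv,Inv]_{\bar q}\ \mathbf{end}$. $\vdash_{\textsc{Wpc}}[P,Q]_{\bar q}\sqsubseteq S$ means this relation is derivable from the structural, common and Wpc rules; $\vdash_{\textsc{Spc}}$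 likewise with the Spc rules instead of the Wpc rules (an equivalence $\equiv$ may be used in either direction as $\sqsubseteq$). *)

(* Defs.v *)
(* Scalars: C := R[i] (mathcomp-real-closed complex numbers)
   over an arbitrary realType R (for R the reals this is the field of complex
   numbers; completeness of R is needed for the infinite sums in the semantics
   of while loops). *)
From HB Require Import structures.
From mathcomp Require Import all_boot all_order all_algebra.
From mathcomp Require Import reals complex.
From Stdlib Require Import ClassicalEpsilon.

Set Implicit Arguments.
Unset Strict Implicit.
Unset Printing Implicit Defensive.

Import Order.TTheory GRing.Theory Num.Theory.
Local Open Scope ring_scope.
Local Open Scope sesquilinear_scope.

Section QProg.

Variable R : realType.
Local Notation C := (R[i]).

Variable V : finType.

(* Hilbert spaces.  The computational basis of H_W is indexed by the   *)
(* classical assignments of booleans to the qubits of W.              *)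

Definition gst := {ffun V -> bool}.
Definition dV := #|{: gst}|.
Definition lst (k : nat) := {ffun 'I_k -> bool}.
Definition dk (k : nat) := #|{: lst k}|.

Definition gop := 'M[C]_dV.
Definition lop k := 'M[C]_(dk k).

Definition reg (k : nat) := {q : k.-tuple V | uniq q}.

Definition ix0 k : 'I_(dk k) := enum_rank ([ffun => false] : lst k).

Definition loc k (q : k.-tuple V) (s : gst) : lst k := [ffun i => s (tnth q i)].
Definition glue k (q : k.-tuple V) (a : lst k) (s : gst) : gst :=
  [ffun v => if [pick i | tnth q i == v] is Some i then a i else s v].
Definition agree_out k (q : k.-tuple V) (s t : gst) : bool :=
  [forall v, (v \notin q) ==> (s v == t v)].

(* extension A (x) I of an operator on H_q to H_V *)
Definition ext k (q : reg k) (A : lop k) : gop :=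
  \matrix_(i, j) (if agree_out (val q) (enum_val i) (enum_val j)
                 then A (enum_rank (loc (val q) (enum_val i)))
                        (enum_rank (loc (val q) (enum_val j)))
                 else 0).

Definition gso := gop -> gop.
Definition lso k := lop k -> lop k.

(* extension E (x) id of a super-operator on H_q to H_V *)
Definition ext_so k (q : reg k) (E : lso k) : gso := fun rho =>
  \matrix_(i, j)
    E (\matrix_(a, b) rho (enum_rank (glue (val q) (enum_val a) (enum_val i)))
                          (enum_rank (glue (val q) (enum_val b) (enum_val j))))
      (enum_rank (loc (val q) (enum_val i))) (enum_rank (loc (val q) (enum_val j))).

Definition psd n (A : 'M[C]_n) : Prop :=
  forall v : 'cV[C]_n, 0 <= (v ^t* *m A *m v) 0 0.

Definition pdo n (rho : 'M[C]_n) : Prop := psd rho /\ \tr rho <= 1.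

(* Subspaces of C^n are represented (mxalgebra) by row spaces; a column
   vector x is represented by the row x^T.  colsp A is the range of A. *)
Definition colsp m n (A : 'M[C]_(m, n)) : 'M[C]_(n, m) := A^T.

Definition is_proj n (P : 'M[C]_n) : bool := (P *m P == P) && (P ^t* == P).
Definition proj k := {P : lop k | is_proj P}.

Lemma is_proj0 n : is_proj (0 : 'M[C]_n).
Proof.
rewrite /is_proj mul0mx eqxx /=; apply/eqP/matrixP => i j.
by rewrite !mxE conjC0.
Qed.

Definition proj0 k : proj k := exist _ 0 (is_proj0 (dk k)).

Definition proj_of k m (S : 'M[C]_(m, dk k)) : proj k :=
  epsilon (inhabits (proj0 k)) (fun P : proj k => (colsp (val P) == S)%MS).

Definition range k (P : proj k) := colsp (val P).
Definition psub k (P Q : proj k) : bool := (range P <= range Q)%MS.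

Definition supp k (A : lop k) : proj k := proj_of (colsp A).
Definition asproj k (A : lop k) : proj k := proj_of (colsp A).

Definition sat n (rho P : 'M[C]_n) : bool := (colsp rho <= colsp P)%MS.

Definition ptop k : proj k := proj_of (colsp (1%:M : lop k)).
Definition pbot k : proj k := proj_of (colsp (0 : lop k)).
Definition pmeet k (P Q : proj k) : proj k := proj_of (range P :&: range Q)%MS.
Definition pjoin k (P Q : proj k) : proj k := proj_of (range P + range Q)%MS.
Definition pperp k (P : proj k) : proj k := proj_of (colsp (1%:M - val P)).
Definition sasaki_imp k (P Q : proj k) : proj k := pjoin (pperp P) (pmeet P Q).
Definition sasaki_conj k (P Q : proj k) : proj k := pmeet P (pjoin (pperp P) Q).

(* E(M): eigenspace of M for eigenvalue 1 (column eigenvectors M x = x);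
   0 if 1 is not an eigenvalue *)
Definition eig1 k (M : lop k) : proj k := proj_of (eigenspace M^T 1).

(* H_emptyset is one-dimensional (dk 0 = 1).  <0|_q Q |0>_q and tr_q(P)
   for operators on H_q are operators on H_emptyset; an operator X on
   H_emptyset is identified with its extension X (x) I_q = X_00 I. *)
Definition bra0ket0 k (Q : lop k) : lop 0 := (Q (ix0 k) (ix0 k))%:M.
Definition ptrace_all k (P : lop k) : lop 0 := (\tr P)%:M.
Definition ext_empty k (X : lop 0) : lop k := X (ix0 0) (ix0 0) *: 1%:M.
Definition ket0bra0_tensor k (X : lop 0) : lop k :=
  X (ix0 0) (ix0 0) *: delta_mx (ix0 k) (ix0 k).

Definition wp_init k (Q : proj k) : proj k :=
  asproj (ext_empty k (val (eig1 (bra0ket0 (val Q))))).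
Definition sp_init k (P : proj k) : proj k :=
  asproj (ket0bra0_tensor k (val (supp (ptrace_all (val P))))).

Definition unitary k := {U : lop k | U \is unitarymx}.
Definition prob := {p : R | (0 <= p <= 1)}.

Inductive prog : Type :=
| PSkip
| PAbort
| PInit k (q : reg k)
| PUnit k (q : reg k) (U : unitary k)
| PAssert k (q : reg k) (P : proj k)
| PSpec k (q : reg k) (P Q : proj k)
| PChoice (S0 S1 : prog) (p : prob)
| PSeq (S0 S1 : prog)
| PIf k (q : reg k) (P : proj k) (S1 S0 : prog)   (* if P[q] then S1 else S0 *)
| PWhile k (q : reg k) (P : proj k) (S : prog).

Definition so_linear n (E : 'M[C]_n -> 'M[C]_n) : Prop :=
  forall (a : C) A B, E (a *: A + B) = a *: E A + E B.

(* ampliation id_m (x) E acting on C^m (x) C^n *)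
Definition ampl m n (E : 'M[C]_n -> 'M[C]_n)
    (X : 'M[C]_#|{: 'I_m * 'I_n}|) : 'M[C]_#|{: 'I_m * 'I_n}| :=
  \matrix_(i, j)
    E (\matrix_(x, y) X (enum_rank ((enum_val i).1, x))
                        (enum_rank ((enum_val j).1, y)))
      (enum_val i).2 (enum_val j).2.

Definition completely_positive n (E : 'M[C]_n -> 'M[C]_n) : Prop :=
  so_linear E /\ forall m X, psd X -> psd (@ampl m n E X).

Definition trace_nonincreasing n (E : 'M[C]_n -> 'M[C]_n) : Prop :=
  forall rho, psd rho -> \tr (E rho) <= \tr rho.

Definition mx_cvg n (u : nat -> 'M[C]_n) (L : 'M[C]_n) : Prop :=
  forall i j (e : R), 0 < e ->
    exists N, forall m, (N <= m)%N -> `|u m i j - L i j| < e%:C%C.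

(* E_k o P o ... o E_1 o P  (Es k' plays the role of E_{k'+1}) *)
Fixpoint while_pref (Pm : gso) (Es : nat -> gso) (k : nat) : gso :=
  match k with
  | 0 => id
  | k'.+1 => fun rho => Es k' (Pm (while_pref Pm Es k' rho))
  end.

Fixpoint den (S : prog) : gso -> Prop :=
  match S with
  | PSkip => fun F => F = id
  | PAbort => fun F => F = fun _ => 0
  | PInit k q => fun F => F = fun rho =>
      \sum_(i < dk k) ext q (delta_mx (ix0 k) i) *m rho *m ext q (delta_mx i (ix0 k))
  | PUnit k q U => fun F => F = fun rho =>
      ext q (val U) *m rho *m (ext q (val U)) ^t*
  | PAssert k q P => fun F => F = fun rho => ext q (val P) *m rho *m ext q (val P)
  | PSpec k q P Q => fun F => exists E : lso k,
      [/\ completely_positive E, trace_nonincreasing E,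
          (forall rho : lop k, pdo rho -> sat rho (val P) -> sat (E rho) (val Q))
        & F = ext_so q E]
  | PChoice S0 S1 p => fun F => exists E0 E1, [/\ den S0 E0, den S1 E1 &
      F = fun rho => (val p)%:C%C *: E0 rho + (1 - val p)%:C%C *: E1 rho]
  | PSeq S0 S1 => fun F => exists E0 E1, [/\ den S0 E0, den S1 E1 &
      F = fun rho => E1 (E0 rho)]
  | PIf k q P S1 S0 => fun F => exists E1 E0, [/\ den S1 E1, den S0 E0 &
      F = fun rho => E1 (ext q (val P) *m rho *m ext q (val P))
                     + E0 (ext q (val (pperp P)) *m rho *m ext q (val (pperp P)))]
  | PWhile k q P Sb => fun F => exists Es : nat -> gso,
      (forall n, den Sb (Es n)) /\
      forall rho, mx_cvg (fun N => \sum_(n < N)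
          (fun X => ext q (val (pperp P)) *m X *m ext q (val (pperp P)))
          (while_pref (fun X => ext q (val P) *m X *m ext q (val P)) Es n rho))
        (F rho)
  end.

Definition hoare_valid (P : gop) (S : prog) (Q : gop) : Prop :=
  forall (rho : gop) (E : gso), pdo rho -> den S E -> sat rho P -> sat (E rho) Q.

Definition refines (S S' : prog) : Prop :=
  forall P Q : gop, is_proj P -> is_proj Q -> hoare_valid P S Q -> hoare_valid P S' Q.

Inductive logic := Wpc | Spc.

Inductive derives : logic -> prog -> prog -> Prop :=
| d_refl L S : derives L S S
| d_trans L S0 S1 S2 : derives L S0 S1 -> derives L S1 S2 -> derives L S0 S2
| d_seq L S0 S1 T0 T1 : derives L S0 T0 -> derives L S1 T1 ->
    derives L (PSeq S0 S1) (PSeq T0 T1)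
| d_choice L S0 S1 T0 T1 p : derives L S0 T0 -> derives L S1 T1 ->
    derives L (PChoice S0 S1 p) (PChoice T0 T1 p)
| d_if L k (q : reg k) P S0 S1 T0 T1 : derives L S0 T0 -> derives L S1 T1 ->
    derives L (PIf q P S1 S0) (PIf q P T1 T0)
| d_while L k (q : reg k) P S T : derives L S T ->
    derives L (PWhile q P S) (PWhile q P T)
| c_bot L k (q : reg k) Q S : derives L (PSpec q (pbot k) Q) S
| c_top L k (q : reg k) P S : derives L (PSpec q P (ptop k)) S
| c_abort L k (q : reg k) P Q : derives L (PSpec q P Q) PAbort
| c_skip L k (q : reg k) P : derives L (PSpec q P P) PSkip
| c_cons L k (q : reg k) P Q R T : psub P R -> psub T Q ->
    derives L (PSpec q P Q) (PSpec q R T)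
| c_seq L k (q : reg k) P Q R :
    derives L (PSpec q P Q) (PSeq (PSpec q P R) (PSpec q R Q))
| w_init k (q : reg k) Q : derives Wpc (PSpec q (wp_init Q) Q) (PInit q)
| w_unit k (q : reg k) (U : unitary k) Q :
    derives Wpc (PSpec q (asproj ((val U) ^t* *m val Q *m val U)) Q) (PUnit q U)
| w_assert k (q : reg k) P Q :
    derives Wpc (PSpec q (sasaki_imp P Q) Q) (PAssert q P)
| w_choice_l k (q : reg k) P P1 P2 Q (p : prob) : 0 < val p < 1 -> P = pmeet P1 P2 ->
    derives Wpc (PSpec q P Q) (PChoice (PSpec q P1 Q) (PSpec q P2 Q) p)
| w_choice_r k (q : reg k) P P1 P2 Q (p : prob) : 0 < val p < 1 -> P = pmeet P1 P2 ->
    derives Wpc (PChoice (PSpec q P1 Q) (PSpec q P2 Q) p) (PSpec q P Q)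
| w_if_l k (q : reg k) P P1 P0 Q :
    derives Wpc (PSpec q (pmeet (sasaki_imp P P1) (sasaki_imp (pperp P) P0)) Q)
                (PIf q P (PSpec q P1 Q) (PSpec q P0 Q))
| w_if_r k (q : reg k) P P1 P0 Q :
    derives Wpc (PIf q P (PSpec q P1 Q) (PSpec q P0 Q))
                (PSpec q (pmeet (sasaki_imp P P1) (sasaki_imp (pperp P) P0)) Q)
| w_while k (q : reg k) P Q R :
    derives Wpc (PSpec q (pmeet (sasaki_imp P Q) (sasaki_imp (pperp P) R)) R)
      (PWhile q P (PSpec q Q (pmeet (sasaki_imp P Q) (sasaki_imp (pperp P) R))))
| s_init k (q : reg k) P : derives Spc (PSpec q P (sp_init P)) (PInit q)
| s_unit k (q : reg k) (U : unitary k) P :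
    derives Spc (PSpec q P (asproj (val U *m val P *m (val U) ^t*))) (PUnit q U)
| s_assert k (q : reg k) P Q :
    derives Spc (PSpec q P (sasaki_conj Q P)) (PAssert q Q)
| s_choice_l k (q : reg k) P Q Q1 Q2 (p : prob) : 0 < val p < 1 -> pjoin Q1 Q2 = Q ->
    derives Spc (PSpec q P Q) (PChoice (PSpec q P Q1) (PSpec q P Q2) p)
| s_choice_r k (q : reg k) P Q Q1 Q2 (p : prob) : 0 < val p < 1 -> pjoin Q1 Q2 = Q ->
    derives Spc (PChoice (PSpec q P Q1) (PSpec q P Q2) p) (PSpec q P Q)
| s_if k (q : reg k) P Q R :
    derives Spc (PSpec q P Q)
      (PIf q R (PSpec q (sasaki_conj R P) Q) (PSpec q (sasaki_conj (pperp R) P) Q))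
| s_while k (q : reg k) P Inv :
    derives Spc (PSpec q Inv (sasaki_conj (pperp P) Inv))
      (PWhile q P (PSpec q (sasaki_conj P Inv) Inv)).

End QProg.

(* Main.v *)
Require Import Defs.
From HB Require Import structures.
From mathcomp Require Import all_boot all_order all_algebra.
From mathcomp Require Import reals complex.
From mathcomp Require Import ring.
From Stdlib Require Import ClassicalEpsilon.
From Stdlib Require Eqdep_dec PeanoNat.
Set Implicit Arguments.
Unset Strict Implicit.
Unset Printing Implicit Defensive.
Import Order.TTheory GRing.Theory Num.Theory.
Local Open Scope ring_scope.
Local Open Scope sesquilinear_scope.



Section A.
Variable R : realType.
Local Notation C := (R[i]).

Lemma trCmul m n p (A : 'M[C]_(m, n)) (B : 'M[C]_(n, p)) :
  (A *m B) ^t* = B ^t* *m A ^t*.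
Proof. by rewrite trmx_mul map_mxM. Qed.

Lemma sub_colspP n p (A : 'M[C]_(n, p)) (P : 'M[C]_n) :
  P *m P = P -> (colsp A <= colsp P)%MS = (P *m A == A).
Proof.
rewrite /colsp => PP; apply/idP/eqP.
  move/submxP=> [D hD].
  have -> : A = P *m D^T by rewrite -[A]trmxK hD trmx_mul trmxK.
  by rewrite mulmxA PP.
move=> <-; rewrite trmx_mul; exact: submxMl.
Qed.

Lemma proj_exists n m (S : 'M[C]_(m, n)) :
  exists P : 'M[C]_n, is_proj P && (colsp P == S)%MS.
Proof.
set B := schmidt (row_base S).
have Bu : B \is unitarymx by apply: schmidt_unitarymx; exact: rank_leq_col.
have BB : B *m B^t* = 1%:M by apply/unitarymxP.
have eqB : (B :=: S)%MS.
  by rewrite /B; apply: eqmx_trans (eqmx_schmidt_free (row_base_free S)) (eq_row_base S).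
set Q := B^t* *m B.
exists Q^T; apply/andP; split.
  rewrite /is_proj; apply/andP; split; apply/eqP.
    by rewrite -trmx_mul /Q mulmxA -(mulmxA _ B) BB mulmx1.
  by rewrite /Q -map_trmx trCmul trmxCK.
rewrite /colsp trmxK; apply/eqmxP.
apply: eqmx_trans _ eqB; apply/eqmxP; apply/andP; split.
  by rewrite /Q submxMl.
by rewrite -{1}[B]mul1mx -BB -mulmxA /Q submxMl.
Qed.

Lemma proj_ofP k m (S : 'M[C]_(m, dk k)) :
  (colsp (val (@proj_of R k m S)) == S)%MS.
Proof.
rewrite /proj_of; apply: (@epsilon_spec _ (inhabits (proj0 R k)) (fun P : proj R k => (colsp (val P) == S)%MS)).
have [P /andP[hP hS]] := proj_exists S.
by exists (exist _ P hP).
Qed.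

Lemma is_projP n (P : 'M[C]_n) : is_proj P -> P *m P = P /\ P ^t* = P.
Proof. by case/andP=> /eqP h1 /eqP h2. Qed.

Lemma proj_uniq n (P Q : 'M[C]_n) : is_proj P -> is_proj Q ->
  (colsp P == colsp Q)%MS -> P = Q.
Proof.
move=> /is_projP[PP Ph] /is_projP[QQ Qh] /andP[s1 s2].
move: s1; rewrite sub_colspP // => /eqP QP.
move: s2; rewrite sub_colspP // => /eqP PQ.
by rewrite -Ph -QP trCmul Ph Qh PQ.
Qed.

Lemma proj_ofE k (A : lop R k) : is_proj A -> val (proj_of (colsp A)) = A.
Proof.
move=> hA; apply: proj_uniq => //; first exact: (svalP (proj_of (colsp A))).
exact: proj_ofP.
Qed.

Lemma projvP k (P : proj R k) : val P *m val P = val P /\ (val P) ^t* = val P.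
Proof. by apply: is_projP; exact: svalP P. Qed.

Lemma is_proj1 n : is_proj (1%:M : 'M[C]_n).
Proof. by rewrite /is_proj mul1mx eqxx /= trmx1 map_mx1. Qed.

Lemma is_proj_compl n (P : 'M[C]_n) : is_proj P -> is_proj (1%:M - P).
Proof.
move=> /is_projP[PP Ph]; rewrite /is_proj; apply/andP; split; apply/eqP.
  by rewrite mulmxBl mul1mx mulmxBr mulmx1 PP subrr subr0.
by rewrite linearB /= map_mxB trmx1 map_mx1 Ph.
Qed.

Lemma val_pperp k (P : proj R k) : val (pperp P) = 1%:M - val P.
Proof. by rewrite /pperp proj_ofE // is_proj_compl //; exact: svalP P. Qed.

Lemma val_ptop k : val (ptop R k) = 1%:M.
Proof. by rewrite /ptop proj_ofE // is_proj1. Qed.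

Lemma val_pbot k : val (pbot R k) = 0.
Proof. by rewrite /pbot proj_ofE // is_proj0. Qed.

Lemma val_asproj k (A : lop R k) : is_proj A -> val (asproj A) = A.
Proof. exact: proj_ofE. Qed.

Lemma range_pmeet k (P Q : proj R k) : (range (pmeet P Q) :=: range P :&: range Q)%MS.
Proof. by apply/eqmxP; exact: proj_ofP. Qed.

Lemma range_pjoin k (P Q : proj R k) : (range (pjoin P Q) :=: range P + range Q)%MS.
Proof. by apply/eqmxP; exact: proj_ofP. Qed.

Lemma psubE k (P Q : proj R k) : psub P Q = (val Q *m val P == val P).
Proof. by rewrite /psub /range sub_colspP //; case: (projvP Q). Qed.

Section Idem.
Variable n : nat.
Variable P : 'M[C]_n.
Hypothesis PP : P *m P = P.
Lemma idem_sub_fix m (A : 'M[C]_(m, n)) : (A <= P^T)%MS -> A *m P^T = A.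
Proof. by case/submxP=> D ->; rewrite -mulmxA -trmx_mul PP. Qed.
Lemma idem_subc_0 m (A : 'M[C]_(m, n)) : (A <= (1%:M - P)^T)%MS -> A *m P^T = 0.
Proof.
case/submxP=> D ->; rewrite -mulmxA -trmx_mul mulmxBr mulmx1 PP subrr.
by rewrite trmx0 mulmx0.
Qed.
Lemma idem_mul_sub m (A : 'M[C]_(m, n)) : (A *m P^T <= P^T)%MS.
Proof. exact: submxMl. Qed.
Lemma idem_mulc_sub m (A : 'M[C]_(m, n)) : (A *m (1%:M - P)^T <= (1%:M - P)^T)%MS.
Proof. exact: submxMl. Qed.
Lemma idem_split m (A : 'M[C]_(m, n)) : A = A *m P^T + A *m (1%:M - P)^T.
Proof. by rewrite linearB /= trmx1 mulmxBr mulmx1 addrC subrK. Qed.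
End Idem.

Section Lattice.
Variable k : nat.
Implicit Types P X Y Z : proj R k.
Local Notation rg P := (range P).

Lemma range_pperp P : (rg (pperp P) :=: (1%:M - val P)^T)%MS.
Proof. by rewrite /range val_pperp. Qed.

Lemma range_conj P X :
  (rg (sasaki_conj P X) :=: rg P :&: ((1%:M - val P)^T + rg X))%MS.
Proof.
rewrite /sasaki_conj; apply: eqmx_trans (range_pmeet _ _) _.
by apply: cap_eqmx => //; apply: eqmx_trans (range_pjoin _ _) _; apply: adds_eqmx => //; exact: range_pperp.
Qed.

Lemma range_imp P Z :
  (rg (sasaki_imp P Z) :=: (1%:M - val P)^T + (rg P :&: rg Z))%MS.
Proof.
rewrite /sasaki_imp; apply: eqmx_trans (range_pjoin _ _) _.
by apply: adds_eqmx; [exact: range_pperp | exact: range_pmeet].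
Qed.


Lemma psub_refl X : psub X X.
Proof. exact: submx_refl. Qed.
Lemma psub_trans X Y Z : psub X Y -> psub Y Z -> psub X Z.
Proof. exact: submx_trans. Qed.
Lemma psub_meet X A B : psub X (pmeet A B) = psub X A && psub X B.
Proof. by rewrite /psub range_pmeet sub_capmx. Qed.
Lemma psub_join A B Y : psub (pjoin A B) Y = psub A Y && psub B Y.
Proof. by rewrite /psub range_pjoin addsmx_sub. Qed.
Lemma psub_top Y : psub (ptop R k) Y -> val Y = 1%:M.
Proof. by rewrite psubE val_ptop mulmx1 => /eqP. Qed.
Lemma psub_bot X : psub X (pbot R k) -> val X = 0.
Proof. by rewrite psubE val_pbot mul0mx => /eqP. Qed.

Lemma conj_mul P X : (colsp (val P *m val X) <= rg (sasaki_conj P X))%MS.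
Proof.
have [PP _] := projvP P.
rewrite range_conj sub_capmx /colsp trmx_mul; apply/andP; split; first exact: submxMl.
have -> : (val X)^T *m (val P)^T = - ((val X)^T *m (1%:M - val P)^T) + (val X)^T.
  by apply/eqP; rewrite eq_sym addrC subr_eq; apply/eqP; exact: idem_split.
apply: addmx_sub_adds; last exact: submx_refl.
by rewrite eqmx_opp submxMl.
Qed.

Lemma conj_of_imp P X Z : psub X (sasaki_imp P Z) -> psub (sasaki_conj P X) Z.
Proof.
have [PP _] := projvP P.
rewrite /psub range_imp range_conj => hX.
set A := (rg P :&: _)%MS.
have hA : (A <= (1%:M - val P)^T + (rg P :&: rg Z))%MS.
  have : (A <= (1%:M - val P)^T + rg X)%MS by exact: capmxSr.
  case/sub_addsmxP=> u ->; apply: addmx_sub.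
    exact: submx_trans (submxMl _ _) (addsmxSl _ _).
  exact: submx_trans (submxMl _ _) hX.
have AP : (A <= rg P)%MS by exact: capmxSl.
case/sub_addsmxP: hA => u hu.
have : A *m (val P)^T = A by apply: (idem_sub_fix PP).
rewrite {1}hu mulmxDl (idem_subc_0 PP) ?submxMl // add0r (idem_sub_fix PP); last first.
  exact: submx_trans (submxMl _ _) (capmxSl _ _).
move=> <-; exact: submx_trans (submxMl _ _) (capmxSr _ _).
Qed.

Lemma imp_of_conj P X Z : psub (sasaki_conj P X) Z -> psub X (sasaki_imp P Z).
Proof.
have [PP _] := projvP P.
rewrite /psub range_imp => hc.
rewrite {1}/range /colsp {1}(idem_split (val P) (val X)^T) addrC.
apply: addmx_sub_adds; first exact: submxMl.
rewrite sub_capmx submxMl /=.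
apply: submx_trans hc; have := conj_mul P X; by rewrite /colsp trmx_mul.
Qed.

Lemma conj_bot P X : psub (sasaki_conj P X) (pbot R k) ->
  psub (sasaki_conj (pperp P) X) (pbot R k) -> val X = 0.
Proof.
have [PP _] := projvP P.
have z : range (pbot R k) = 0 by rewrite /range val_pbot /colsp trmx0.
rewrite /psub z => h1 h2.
have e1 : (val X)^T *m (val P)^T = 0.
  apply/eqP; rewrite -submx0; apply: submx_trans h1.
  by have := conj_mul P X; rewrite /colsp trmx_mul.
have e2 : (val X)^T *m (1%:M - val P)^T = 0.
  apply/eqP; rewrite -submx0; apply: submx_trans h2.
  by have := conj_mul (pperp P) X; rewrite /colsp trmx_mul val_pperp.
by apply: trmx_inj; rewrite (idem_split (val P) (val X)^T) e1 e2 addr0 trmx0.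
Qed.

Lemma conj_mono P X X' : psub X X' -> psub (sasaki_conj P X) (sasaki_conj P X').
Proof.
rewrite /psub !range_conj => h; apply: capmxS; first exact: submx_refl.
by apply: addsmxS => //; exact: submx_refl.
Qed.

Lemma conj_fix P X Y : psub (sasaki_conj P X) Y ->
  val Y *m (val P *m val X) = val P *m val X.
Proof.
move=> h; apply/eqP; rewrite -sub_colspP; last by case: (projvP Y).
exact: submx_trans (conj_mul P X) h.
Qed.

End Lattice.
End A.



Section Comb.
Variable V : finType.
Variable k : nat.
Variable q : reg V k.
Local Notation t := (val q).

Lemma glue_out (a : lst k) (s : gst V) v : v \notin t -> glue t a s v = s v.
Proof.
move=> vn; rewrite /glue ffunE; case: pickP => // i /eqP ei.
by move: vn; rewrite -ei mem_tnth.
Qed.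

Lemma loc_glue a s : loc t (glue t a s) = a.
Proof.
apply/ffunP=> i; rewrite /loc /glue !ffunE; case: pickP => [j /eqP|/(_ i)].
  by move/(tuple_uniqP _ (valP q)) => ->.
by rewrite eqxx.
Qed.

Lemma glue_loc s : glue t (loc t s) s = s.
Proof.
apply/ffunP=> v; rewrite /loc /glue !ffunE; case: pickP => // i /eqP <-.
by rewrite ffunE.
Qed.

Lemma glue_glue a b s : glue t a (glue t b s) = glue t a s.
Proof.
apply/ffunP=> v; rewrite /glue !ffunE; case: pickP => // i; by rewrite ffunE => ->.
Qed.

Lemma agree_glue a b s u : agree_out t (glue t a s) (glue t b u) = agree_out t s u.
Proof.
rewrite /agree_out; apply: eq_forallb => v; case vq: (v \in t) => //=.
by rewrite !glue_out ?vq.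
Qed.

Lemma agree_sym s u : agree_out t s u = agree_out t u s.
Proof. by rewrite /agree_out; apply: eq_forallb => v; rewrite eq_sym. Qed.

Lemma agree_glue_eq a s u : agree_out t s u -> glue t a s = glue t a u.
Proof.
move=> /forallP h; apply/ffunP=> v; rewrite /glue !ffunE; case: pickP => // nv.
have vn : v \notin t by apply/tnthP=> [[i ei]]; have := nv i; rewrite ei eqxx.
by move/implyP: (h v) => /(_ vn) /eqP.
Qed.

Lemma agree_glue_r a s : agree_out t s (glue t a s).
Proof. by apply/forallP=> v; apply/implyP=> vn; rewrite glue_out. Qed.

End Comb.

Section Blk.
Variable R : realType.
Local Notation C := (R[i]).
Variable V : finType.
Variable k : nat.
Variable q : reg V k.
Local Notation t := (val q).

Definition blk (s u : gst V) (M : gop R V) : lop R k :=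
  \matrix_(a, b) M (enum_rank (glue t (enum_val a) s)) (enum_rank (glue t (enum_val b) u)).

Lemma sum_agree (x : gst V) (F : 'I_(dV V) -> C) :
  \sum_(l | agree_out t x (enum_val l)) F l =
  \sum_(c : 'I_(dk k)) F (enum_rank (glue t (enum_val c) x)).
Proof.
rewrite (reindex_onto (fun c : 'I_(dk k) => enum_rank (glue t (enum_val c) x))
                      (fun l => enum_rank (loc t (enum_val l)))) /=.
  apply: eq_bigl => c; rewrite enum_rankK agree_glue_r /= loc_glue enum_valK eqxx //.
move=> l hl; rewrite enum_rankK (agree_glue_eq _ hl) glue_loc enum_valK //.
Qed.

Lemma blk_extmul s u (A : lop R k) M : blk s u (ext q A *m M) = A *m blk s u M.
Proof.
apply/matrixP => a b; rewrite !mxE.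
rewrite (eq_bigr (fun l => if agree_out t (glue t (enum_val a) s) (enum_val l) then
   A a (enum_rank (loc t (enum_val l))) * M l (enum_rank (glue t (enum_val b) u)) else 0)); last first.
  by move=> l _; rewrite !mxE enum_rankK loc_glue enum_valK; case: ifP => //; rewrite mul0r.
rewrite -big_mkcond sum_agree; apply: eq_bigr => c _.
by rewrite enum_rankK loc_glue enum_valK glue_glue !mxE.
Qed.

Lemma blk_mulext s u (B : lop R k) M : blk s u (M *m ext q B) = blk s u M *m B.
Proof.
apply/matrixP => a b; rewrite !mxE.
rewrite (eq_bigr (fun l => if agree_out t (glue t (enum_val b) u) (enum_val l) then
   M (enum_rank (glue t (enum_val a) s)) l * B (enum_rank (loc t (enum_val l))) b else 0)); last first.
  by move=> l _; rewrite !mxE enum_rankK loc_glue enum_valK agree_sym; case: ifP => //; rewrite mulr0.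
rewrite -big_mkcond sum_agree; apply: eq_bigr => c _.
by rewrite enum_rankK loc_glue enum_valK glue_glue !mxE.
Qed.

Lemma blk_ext s u (A : lop R k) : blk s u (ext q A) = if agree_out t s u then A else 0.
Proof.
apply/matrixP => a b; rewrite !mxE !enum_rankK agree_glue !loc_glue !enum_valK.
by case: ifP => //; rewrite mxE.
Qed.

Lemma blk_ext_so s u (E : lso R k) M : blk s u (ext_so q E M) = E (blk s u M).
Proof.
apply/matrixP => a b; rewrite !mxE !enum_rankK !loc_glue !enum_valK.
congr (E _ _ _); apply/matrixP => c d; rewrite !mxE !glue_glue //.
Qed.

Lemma blk_inj (M N : gop R V) : (forall s u, blk s u M = blk s u N) -> M = N.
Proof.
move=> h; apply/matrixP => i j.
have := congr1 (fun X : lop R k => X (enum_rank (loc t (enum_val i))) (enum_rank (loc t (enum_val j)))) (h (enum_val i) (enum_val j)).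
by rewrite /= !mxE !enum_rankK !glue_loc !enum_valK.
Qed.

Lemma blkD s u M N : blk s u (M + N) = blk s u M + blk s u N.
Proof. by apply/matrixP => a b; rewrite !mxE. Qed.
Lemma blkZ s u c M : blk s u (c *: M) = c *: blk s u M.
Proof. by apply/matrixP => a b; rewrite !mxE. Qed.
Lemma blk0 s u : blk s u 0 = 0.
Proof. by apply/matrixP => a b; rewrite !mxE. Qed.
Lemma blk_sum s u I (r : seq I) (F : I -> gop R V) :
  blk s u (\sum_(i <- r) F i) = \sum_(i <- r) blk s u (F i).
Proof. by elim/big_rec2: _ => [|i y M _ <-]; rewrite ?blk0 ?blkD. Qed.
Lemma blk_adj s u M : blk s u (M ^t*) = (blk u s M) ^t*.
Proof. by apply/matrixP => a b; rewrite !mxE. Qed.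

Lemma ext_adj (A : lop R k) : (ext q A) ^t* = ext q (A ^t*).
Proof.
apply: blk_inj => s u; rewrite blk_adj !blk_ext agree_sym.
by case: ifP => _ //; apply/matrixP=> a b; rewrite !mxE conjC0.
Qed.

End Blk.



Section Lim.
Variable R : realType.
Local Notation C := (R[i]).
Local Notation Re := complex.Re.

Definition scvg (x : nat -> C) (l : C) := forall e : R, 0 < e ->
  exists N, forall m, (N <= m)%N -> `|x m - l| < e%:C%C.

Lemma normRe (z : C) : `|z| = (Re `|z|)%:C%C.
Proof. by rewrite RRe_real // normr_real. Qed.

Lemma Re_norm_ge0 (z : C) : 0 <= Re `|z|.
Proof. by rewrite -ler0c -normRe. Qed.

Lemma scvg_ext x y l : (forall m, x m = y m) -> scvg x l -> scvg y l.
Proof. by move=> e h eps /h [N hN]; exists N => m /hN; rewrite e. Qed.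

Lemma scvg_uniq x l l' : scvg x l -> scvg x l' -> l = l'.
Proof.
move=> h1 h2; apply/eqP; rewrite -subr_eq0 -normr_eq0; apply/eqP.
set d := `|l - l'|.
have dr : d = (Re d)%:C%C by rewrite /d -normRe.
have r0 : 0 <= Re d by exact: Re_norm_ge0.
move: r0; rewrite le_eqVlt => /orP[/eqP r0|rpos]; first by rewrite dr -r0.
have e0 : 0 < Re d / 2 by rewrite divr_gt0.
have [N1 hN1] := h1 _ e0; have [N2 hN2] := h2 _ e0.
have a1 := hN1 (maxn N1 N2) (leq_maxl _ _).
have a2 := hN2 (maxn N1 N2) (leq_maxr _ _).
have : d < d.
  rewrite {2}dr.
  have -> : Re d = Re d / 2 + Re d / 2 by rewrite -splitr.
  rewrite rmorphD /=.
  apply: (le_lt_trans _ (ltrD a1 a2)).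
  rewrite /d (_ : l - l' = (x (maxn N1 N2) - l') - (x (maxn N1 N2) - l)); last first.
    by rewrite opprB [RHS]addrC addrA subrK.
  by rewrite [X in _ <= X]addrC ler_normB.
by rewrite ltxx.
Qed.

Lemma scvg_const c : scvg (fun _ => c) c.
Proof. by move=> e e0; exists 0%N => m _; rewrite subrr normr0 ltcR. Qed.

Lemma scvg_add x y l l' : scvg x l -> scvg y l' ->
  scvg (fun m => x m + y m) (l + l').
Proof.
move=> h1 h2 e e0.
have e2 : 0 < e / 2 by rewrite divr_gt0.
have [N1 hN1] := h1 _ e2; have [N2 hN2] := h2 _ e2.
exists (maxn N1 N2) => m hm.
have a1 := hN1 m (leq_trans (leq_maxl _ _) hm).
have a2 := hN2 m (leq_trans (leq_maxr _ _) hm).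
rewrite (_ : x m + y m - (l + l') = (x m - l) + (y m - l')); last first.
  by rewrite opprD addrACA.
apply: (le_lt_trans (ler_normD _ _)).
rewrite (splitr e) rmorphD /=; exact: ltrD.
Qed.

Lemma scvg_scale c x l : scvg x l -> scvg (fun m => c * x m) (c * l).
Proof.
move=> h e e0.
set nc := Re `|c|.
have nc0 : 0 <= nc by exact: Re_norm_ge0.
have d0 : 0 < nc + 1 by rewrite ltr_wpDl.
have e' : 0 < e / (nc + 1) by rewrite divr_gt0.
have [N hN] := h _ e'.
exists N => m /hN hm.
rewrite -mulrBr normrM (normRe c) -/nc.
apply: (le_lt_trans (ler_wpM2l _ (ltW hm))); first by rewrite ler0c.
rewrite -rmorphM /= ltcR mulrA ltr_pdivrMr // mulrDr mulr1 mulrC ltrDl //.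
Qed.

Lemma scvg_scaler c x l : scvg x l -> scvg (fun m => x m * c) (l * c).
Proof.
move=> h; apply: (@scvg_ext (fun m => c * x m)); first by move=> m; rewrite mulrC.
by rewrite mulrC; apply: scvg_scale.
Qed.

Lemma scvg_sum I (r : seq I) (F : I -> nat -> C) (L : I -> C) :
  (forall i, scvg (F i) (L i)) ->
  scvg (fun m => \sum_(i <- r) F i m) (\sum_(i <- r) L i).
Proof.
move=> h; elim: r => [|a r IH].
  by apply: (@scvg_ext (fun _ => 0)); [move=> m; rewrite big_nil | rewrite big_nil; exact: scvg_const].
apply: (@scvg_ext (fun m => F a m + \sum_(i <- r) F i m)).
  by move=> m; rewrite big_cons.
by rewrite big_cons; apply: scvg_add.
Qed.

Lemma mx_cvg_lin n (u : nat -> 'M[C]_n) L (A B : 'M[C]_n) :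
  mx_cvg u L -> mx_cvg (fun m => A *m u m *m B) (A *m L *m B).
Proof.
move=> h i j.
have : scvg (fun m => \sum_b (\sum_a A i a * u m a b) * B b j)
            (\sum_b (\sum_a A i a * L a b) * B b j).
  apply: scvg_sum => b; apply: scvg_scaler; apply: scvg_sum => a.
  apply: scvg_scale => e e0; exact: h.
have E1 m : \sum_b (\sum_a A i a * u m a b) * B b j = (A *m u m *m B) i j.
  by rewrite !mxE; apply: eq_bigr => b _; rewrite !mxE.
have E2 : \sum_b (\sum_a A i a * L a b) * B b j = (A *m L *m B) i j.
  by rewrite !mxE; apply: eq_bigr => b _; rewrite !mxE.
by rewrite E2 => /(scvg_ext E1).
Qed.

Lemma mx_cvg_uniq n (u : nat -> 'M[C]_n) L L' : mx_cvg u L -> mx_cvg u L' -> L = L'.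
Proof.
move=> h1 h2; apply/matrixP=> i j.
by apply: (@scvg_uniq (fun m => u m i j)) => e e0; [exact: h1 | exact: h2].
Qed.

Lemma mx_cvg_const n (M : 'M[C]_n) : mx_cvg (fun _ => M) M.
Proof. by move=> i j; exact: scvg_const. Qed.

End Lim.



Section Pos.
Variable R : realType.
Local Notation C := (R[i]).

Lemma trCmul' m n p (A : 'M[C]_(m, n)) (B : 'M[C]_(n, p)) :
  (A *m B) ^t* = B ^t* *m A ^t*.
Proof. by rewrite trmx_mul map_mxM. Qed.

Section Lin.
Variable n : nat.
Variable E : 'M[C]_n -> 'M[C]_n.
Hypothesis hE : so_linear E.
Lemma lin0 : E 0 = 0.
Proof.
have h := hE 1 0 0; rewrite !scale1r addr0 in h.
by move: (congr1 (fun X => X - E 0) h); rewrite subrr addrK.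
Qed.
Lemma linD A B : E (A + B) = E A + E B.
Proof. by have := hE 1 A B; rewrite !scale1r. Qed.
Lemma linZ c A : E (c *: A) = c *: E A.
Proof. by rewrite -[c *: A]addr0 hE lin0 addr0. Qed.
Lemma lin_sum I (r : seq I) (F : I -> 'M[C]_n) :
  E (\sum_(i <- r) F i) = \sum_(i <- r) E (F i).
Proof. by elim/big_rec2: _ => [|i y M _ <-]; rewrite ?lin0 ?linD. Qed.
End Lin.

Definition sform n (B : 'M[C]_n) (u w : 'cV[C]_n) := (u ^t* *m B *m w) 0 0.

Lemma sformDl n B (u1 u2 w : 'cV[C]_n) : sform B (u1 + u2) w = sform B u1 w + sform B u2 w.
Proof. by rewrite /sform linearD /= map_mxD !mulmxDl mxE. Qed.
Lemma sformDr n B (u w1 w2 : 'cV[C]_n) : sform B u (w1 + w2) = sform B u w1 + sform B u w2.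
Proof. by rewrite /sform mulmxDr mxE. Qed.
Lemma sformZl n B c (u w : 'cV[C]_n) : sform B (c *: u) w = c^* * sform B u w.
Proof. by rewrite /sform linearZ /= map_mxZ -!scalemxAl mxE. Qed.
Lemma sformZr n B c (u w : 'cV[C]_n) : sform B u (c *: w) = c * sform B u w.
Proof. by rewrite /sform -scalemxAr mxE. Qed.
Lemma sform_delta n B (a b : 'I_n) : sform B (delta_mx a 0) (delta_mx b 0) = B a b.
Proof.
rewrite /sform; have -> : (delta_mx a 0 : 'cV[C]_n) ^t* = delta_mx 0 a.
  by apply/matrixP=> i j; rewrite !mxE conjC_nat andbC.
by rewrite -rowE -colE !mxE.
Qed.

Lemma quad0_eq0 n (B : 'M[C]_n) : (forall v, sform B v v = 0) -> B = 0.
Proof.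
move=> h; apply/matrixP => a b; rewrite mxE.
set ea : 'cV[C]_n := delta_mx a 0; set eb : 'cV[C]_n := delta_mx b 0.
have haa := h ea; have hbb := h eb.
rewrite /ea sform_delta in haa; rewrite /eb sform_delta in hbb.
have h1 := h (ea + eb).
have h2 := h (ea + 'i *: eb).
rewrite !sformDl !sformDr !sformZl !sformZr /ea /eb !sform_delta haa hbb in h1 h2.
move: h1 h2; rewrite !mulr0 !addr0 !add0r conjCi => h1 h2.
have e1 : B b a = - B a b by apply/eqP; rewrite -addr_eq0 addrC h1.
move: h2; rewrite e1 mulrN mulNr opprK -mulrDr => /eqP; rewrite mulf_eq0 (negPf (neq0Ci _)) /=.
by rewrite -mulr2n -mulr_natr mulf_eq0 pnatr_eq0 orbF => /eqP.
Qed.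

Lemma psd_herm n (A : 'M[C]_n) : psd A -> A ^t* = A.
Proof.
move=> hA; apply/eqP; rewrite -subr_eq0; apply/eqP.
have sub00 (M N : 'M[C]_1) : (M - N) 0 0 = M 0 0 - N 0 0 by rewrite !mxE.
apply: quad0_eq0 => v; rewrite /sform mulmxBr mulmxBl sub00.
have e : (v ^t* *m A ^t* *m v) 0 0 = ((v ^t* *m A *m v) 0 0)^*.
  have -> : v ^t* *m A ^t* *m v = (v ^t* *m A *m v) ^t* by rewrite !trCmul' trmxCK mulmxA.
  by rewrite !mxE.
rewrite e conj_Creal ?subrr //; apply: ger0_real; exact: hA.
Qed.


Lemma sum_delta n (F : 'I_n -> C) (a : 'I_n) :
  \sum_(y < n) (y == a)%:R * F y = F a.
Proof.
rewrite (bigD1 a) //= eqxx mul1r big1 ?addr0 // => y /negPf ->; by rewrite mul0r.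
Qed.

Lemma sum_delta' n (F : 'I_n -> C) (a : 'I_n) :
  \sum_(y < n) (a == y)%:R * F y = F a.
Proof. by rewrite -[RHS]sum_delta; apply: eq_bigr => y _; rewrite eq_sym. Qed.

Lemma cp_psd n (E : 'M[C]_n -> 'M[C]_n) : completely_positive E ->
  forall A, psd A -> psd (E A).
Proof.
case=> hlin hcp A hA.
pose N := #|{: 'I_1 * 'I_n}|.
pose K : 'M[C]_(N, n) := \matrix_(r, a) ((enum_val r).2 == a)%:R.
have Kc : K ^t* = K^T.
  by apply/matrixP=> i j; rewrite !mxE conjC_nat.
have Kc' : (K^T) ^t* = K.
  by apply/matrixP=> i j; rewrite !mxE conjC_nat.
have KtK : K^T *m K = 1%:M.
  apply/matrixP=> a b; rewrite !mxE.
  rewrite (reindex (@enum_rank _)) /=; last by apply: onW_bij; exact: enum_rank_bij.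
  rewrite (eq_bigr (fun j : 'I_1 * 'I_n => (j.2 == a)%:R * (j.2 == b)%:R)); last first.
    by move=> j _; rewrite !mxE enum_rankK.
  rewrite -(pair_bigA _ (fun (x : 'I_1) (y : 'I_n) => (y == a)%:R * (y == b)%:R)) big_ord1 /=.
  by rewrite sum_delta eq_sym.
have KAK (B : 'M[C]_n) : K *m B *m K^T = \matrix_(r, s) B (enum_val r).2 (enum_val s).2.
  apply/matrixP=> r s; rewrite !mxE.
  rewrite (eq_bigr (fun b => ((enum_val s).2 == b)%:R * B (enum_val r).2 b)) ?sum_delta' //.
  move=> b _; rewrite !mxE (eq_bigr (fun a => ((enum_val r).2 == a)%:R * B a b)) ?sum_delta'.
    by rewrite mulrC.
  by move=> a _; rewrite /K mxE.
have psdK (B : 'M[C]_n) : psd B -> psd (K *m B *m K^T).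
  move=> hB v; have := hB (K^T *m v).
  by rewrite trCmul' Kc' !mulmxA.
have hX := hcp 1%N _ (psdK A hA).
have amplE : ampl E (K *m A *m K^T) = K *m E A *m K^T.
  rewrite !KAK; apply/matrixP=> r s; rewrite !mxE.
  have -> : \matrix_(x, y) (\matrix_(r0, s0) A (enum_val r0).2 (enum_val s0).2)
        (enum_rank ((enum_val r).1, x)) (enum_rank ((enum_val s).1, y)) = A.
    by apply/matrixP=> x y; rewrite !mxE !enum_rankK.
  by [].
move=> w; have := hX (K *m w); rewrite amplE.
rewrite trCmul' Kc.
have -> : w ^t* *m K^T *m (K *m E A *m K^T) *m (K *m w) =
          w ^t* *m (K^T *m K) *m E A *m (K^T *m K) *m w by rewrite !mulmxA.
by rewrite KtK mulmx1 mulmx1.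
Qed.


Lemma sub_colspP' n p (A : 'M[C]_(n, p)) (P : 'M[C]_n) :
  P *m P = P -> (colsp A <= colsp P)%MS = (P *m A == A).
Proof.
rewrite /colsp => PP; apply/idP/eqP.
  move/submxP=> [D hD].
  have -> : A = P *m D^T by rewrite -[A]trmxK hD trmx_mul trmxK.
  by rewrite mulmxA PP.
move=> <-; rewrite trmx_mul; exact: submxMl.
Qed.

Lemma polar (xa xb ya yb : C) :
  2 * (xa * yb^*) = (xa + ya) * (xb + yb)^* - xa * xb^* - ya * yb^* +
    'i * ((xa + 'i * ya) * (xb + 'i * yb)^* - xa * xb^* - ya * yb^*).
Proof.
rewrite !rmorphD !rmorphM /= conjCi.
apply/eqP; rewrite eq_sym -subr_eq0.
set u := xb^*; set w := yb^*.
have -> : (xa + ya) * (u + w) - xa * u - ya * w +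
   'i * ((xa + 'i * ya) * (u + - 'i * w) - xa * u - ya * w) - 2 * (xa * w)
   = (1 + 'i * 'i) * (ya * u - xa * w - 'i * ya * w) by ring.
by rewrite mulCii subrr mul0r.
Qed.

Section SpecLocal.
Variable n : nat.
Variable E : 'M[C]_n -> 'M[C]_n.
Variables X Y : 'M[C]_n.
Hypothesis hX : is_proj X.
Hypothesis hY : is_proj Y.
Hypothesis hcp : completely_positive E.
Hypothesis hE : forall rho, pdo rho -> sat rho X -> sat (E rho) Y.

Let hlin : so_linear E := hcp.1.
Definition good M := Y *m E M *m Y = E M.

Lemma good0 : good 0.
Proof. by rewrite /good (lin0 hlin) mulmx0 mul0mx. Qed.
Lemma goodD A B : good A -> good B -> good (A + B).
Proof. by rewrite /good !(linD hlin) mulmxDr mulmxDl => -> ->. Qed.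
Lemma goodZ c A : good A -> good (c *: A).
Proof. by rewrite /good !(linZ hlin) -scalemxAr -scalemxAl => ->. Qed.
Lemma goodN A : good A -> good (- A).
Proof. by move=> h; rewrite -scaleN1r; apply: goodZ. Qed.

Lemma good_rank1 (z : 'cV[C]_n) : X *m z = z -> good (z *m z ^t*).
Proof.
move=> Xz.
have [XX Xh] : X *m X = X /\ X ^t* = X by case/andP: hX => /eqP ? /eqP.
have [YY Yh] : Y *m Y = Y /\ Y ^t* = Y by case/andP: hY => /eqP ? /eqP.
set T := \tr (z *m z ^t*).
have T0 : 0 <= T.
  rewrite /T /mxtrace; apply: sumr_ge0 => i _; rewrite !mxE big_ord1 !mxE.
  exact: mul_conjC_ge0.
have d0 : 0 < 1 + T by apply: (lt_le_trans ltr01); rewrite lerDl.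
set c := (1 + T)^-1.
have c0 : 0 < c by rewrite invr_gt0.
set N := c *: (z *m z ^t*).
have psdN : psd N.
  move=> v.
  have -> : v ^t* *m N *m v = c *: ((v ^t* *m z) *m (v ^t* *m z) ^t*).
    by rewrite /N -scalemxAr -scalemxAl !trCmul' trmxCK !mulmxA.
  rewrite mxE [X in _ * X]mxE big_ord1 !mxE; apply: mulr_ge0; first exact: ltW.
  exact: mul_conjC_ge0.
have trN : \tr N <= 1.
  rewrite /N mxtraceZ -/T /c mulrC ler_pdivrMr // mul1r.
  by rewrite lerDr ler01.
have satN : sat N X.
  by rewrite /sat sub_colspP' // /N -scalemxAr mulmxA Xz.
have hYN : Y *m E N = E N.
  by apply/eqP; rewrite -sub_colspP' //; apply: hE.
have hermN : (E N) ^t* = E N by apply: psd_herm; apply: cp_psd.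
have hNY : E N *m Y = E N.
  by have := congr1 (fun M => M ^t*) hYN; rewrite trCmul' hermN Yh.
have gN : good N by rewrite /good hYN hNY.
move: gN; rewrite /good /N (linZ hlin) -scalemxAr -scalemxAl.
move/(scalerI (lt0r_neq0 c0)); done.
Qed.

Lemma good_xy (x y : 'cV[C]_n) : X *m x = x -> X *m y = y -> good (x *m y ^t*).
Proof.
move=> Xx Xy.
have G1 : good ((x + y) *m (x + y) ^t*) by apply: good_rank1; rewrite mulmxDr Xx Xy.
have G2 := good_rank1 Xx.
have G3 := good_rank1 Xy.
have G4 : good ((x + 'i *: y) *m (x + 'i *: y) ^t*).
  by apply: good_rank1; rewrite mulmxDr -scalemxAr Xx Xy.
have := goodD (goodD (goodD G1 (goodN G2)) (goodN G3))
   (goodZ 'i (goodD (goodD G4 (goodN G2)) (goodN G3))).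
have -> : (x + y) *m (x + y) ^t* + - (x *m x ^t*) + - (y *m y ^t*) +
    'i *: ((x + 'i *: y) *m (x + 'i *: y) ^t* + - (x *m x ^t*) + - (y *m y ^t*))
    = 2 *: (x *m y ^t*).
  apply/matrixP=> i j; rewrite !mxE !big_ord1 !mxE.
  by rewrite (polar (x i ord0) (x j ord0) (y i ord0) (y j ord0)).
move/(goodZ 2^-1); rewrite scalerA mulVf ?scale1r //.
by rewrite pnatr_eq0.
Qed.

Lemma good_all M : X *m M *m X = M -> good M.
Proof.
move=> hM.
have [XX Xh] : X *m X = X /\ X ^t* = X by case/andP: hX => /eqP ? /eqP.
have expand : X *m M *m X = \sum_a \sum_b M a b *:
   ((X *m (delta_mx a (0 : 'I_1) : 'cV[C]_n)) *m (X *m (delta_mx b (0 : 'I_1) : 'cV[C]_n)) ^t*).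
  apply/matrixP=> i j; rewrite summxE.
  rewrite (eq_bigr (fun a => \sum_b M a b * (X i a * X b j))); last first.
    move=> a _; rewrite summxE; apply: eq_bigr => b _.
    rewrite !mxE big_ord1 !mxE.
    have e1 : forall (u : 'I_n) (v : 'I_n), \sum_(c < n) X u c * (delta_mx v (0 : 'I_1) : 'cV[C]_n) c 0 = X u v.
      move=> u v; rewrite (bigD1 v) //= mxE eqxx mulr1 big1 ?addr0 // => c /negPf cv.
      by rewrite mxE cv mulr0.
    rewrite (eq_bigr (fun c => X i c * (delta_mx a (0 : 'I_1) : 'cV[C]_n) c 0)); last by move=> c _; rewrite !mxE.
    rewrite e1; congr (_ * (_ * _)).
    rewrite (eq_bigr (fun c => X j c * (delta_mx b (0 : 'I_1) : 'cV[C]_n) c 0)); last by move=> c _; rewrite !mxE.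
    rewrite e1.
    by have := congr1 (fun A : 'M[C]_n => A b j) Xh; rewrite !mxE.
  rewrite !mxE.
  rewrite [LHS](eq_bigr (fun b => \sum_a X i a * M a b * X b j)); last by move=> b _; rewrite mxE mulr_suml.
  rewrite exchange_big /=; apply: eq_bigr => a _; apply: eq_bigr => b _.
  by rewrite mulrCA mulrA.
rewrite -hM expand.
apply: (big_ind good good0 goodD) => a _.
apply: (big_ind good good0 goodD) => b _.
apply: goodZ; apply: good_xy; by rewrite mulmxA XX.
Qed.

End SpecLocal.

End Pos.



Section F1.
Variable R : realType.
Local Notation C := (R[i]).
Variable V : finType.

Lemma ext_mul k (q : reg V k) (A B : lop R k) : ext q A *m ext q B = ext q (A *m B).
Proof.
apply: (@blk_inj _ _ _ q) => s u; rewrite blk_extmul !blk_ext.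
by case: ifP => _; rewrite ?mulmx0.
Qed.

Lemma ext0 k (q : reg V k) : ext q (0 : lop R k) = 0.
Proof. by apply: (@blk_inj _ _ _ q) => s u; rewrite blk_ext blk0; case: ifP. Qed.

Lemma mx_cvg_ext n (u v : nat -> 'M[C]_n) L :
  (forall m, u m = v m) -> mx_cvg u L -> mx_cvg v L.
Proof. by move=> e h i j; apply: (@scvg_ext R (fun m => u m i j) (fun m => v m i j)); [move=> m; rewrite e | exact: h]. Qed.

Lemma den_zero (S : prog R V) E : den S E -> E 0 = 0.
Proof.
elim: S E => /=.
- by move=> E ->.
- by move=> E ->.
- by move=> k q E ->; rewrite big1 // => i _; rewrite mulmx0 mul0mx.
- by move=> k q U E ->; rewrite mulmx0 mul0mx.
- by move=> k q P E ->; rewrite mulmx0 mul0mx.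
- move=> k q P Q E [E0 [cp _ _ ->]].
  apply: (@blk_inj _ _ _ q) => s u; rewrite blk_ext_so !blk0; exact: (lin0 cp.1).
- move=> S0 IH0 S1 IH1 p E [E0 [E1 [h0 h1 ->]]].
  by rewrite (IH0 _ h0) (IH1 _ h1) !scaler0 addr0.
- move=> S0 IH0 S1 IH1 E [E0 [E1 [h0 h1 ->]]].
  by rewrite (IH0 _ h0) (IH1 _ h1).
- move=> k q P S1 IH1 S0 IH0 E [E1 [E0 [h1 h0 ->]]].
  by rewrite !mulmx0 !mul0mx (IH0 _ h0) (IH1 _ h1) addr0.
- move=> k q P Sb IH E [Es [hEs hcvg]].
  have wp0 n : while_pref (fun X => ext q (val P) *m X *m ext q (val P)) Es n 0 = 0.
    by elim: n => //= n ->; rewrite mulmx0 mul0mx (IH _ (hEs n)).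
  have := hcvg 0.
  move/(mx_cvg_ext (v := fun _ => 0)) => h.
  apply/esym; apply: (mx_cvg_uniq (mx_cvg_const 0)); apply: h.
  by move=> m; rewrite big1 // => n _; rewrite wp0 mulmx0 mul0mx.
Qed.

End F1.

Section Main.
Variable R : realType.
Local Notation C := (R[i]).
Variable V : finType.
Variable k : nat.
Variable q : reg V k.

Definition TS (X : lop R k) (M : gop R V) :=
  forall s u, X *m blk q s u M *m X = blk q s u M.

Lemma TS_extE X M : ext q X *m M *m ext q X = M -> TS X M.
Proof. by move=> h s u; rewrite -{2}h blk_mulext blk_extmul. Qed.

Lemma ext_TS X M : TS X M -> ext q X *m M *m ext q X = M.
Proof. by move=> h; apply: (@blk_inj _ _ _ q) => s u; rewrite blk_mulext blk_extmul h. Qed.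

Lemma TS0 X : TS X 0.
Proof. by move=> s u; rewrite blk0 mulmx0 mul0mx. Qed.
Lemma TSD X M N : TS X M -> TS X N -> TS X (M + N).
Proof. by move=> h1 h2 s u; rewrite blkD mulmxDr mulmxDl h1 h2. Qed.
Lemma TSZ X c M : TS X M -> TS X (c *: M).
Proof. by move=> h s u; rewrite blkZ -scalemxAr -scalemxAl h. Qed.
Lemma TS_sum X I (r : seq I) (F : I -> gop R V) :
  (forall i, TS X (F i)) -> TS X (\sum_(i <- r) F i).
Proof. by move=> h; elim/big_rec: _ => [|i M _ hM]; [exact: TS0 | exact: TSD]. Qed.

Lemma TS_mono (X X' : proj R k) M : psub X X' -> TS (val X) M -> TS (val X') M.
Proof.
rewrite psubE => /eqP h1 h s u.
have [_ Xh] := projvP X; have [_ X'h] := projvP X'.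
have h2 : val X *m val X' = val X by rewrite -Xh -X'h -trCmul h1.
by rewrite -h !mulmxA h1 -mulmxA h2.
Qed.

Lemma TS_K (K : lop R k) (X Y : proj R k) M :
  val Y *m K *m val X = K *m val X -> TS (val X) M ->
  TS (val Y) (ext q K *m M *m ext q (K ^t*)).
Proof.
move=> hK h s u.
have [_ Xh] := projvP X; have [_ Yh] := projvP Y.
have hK' : val X *m K ^t* *m val Y = val X *m K ^t*.
  by have := congr1 (fun A => A ^t*) hK; rewrite !trCmul Xh Yh mulmxA.
rewrite blk_mulext blk_extmul -h !mulmxA hK; rewrite -mulmxA in hK'; rewrite -!mulmxA hK'.
by rewrite !mulmxA.
Qed.

Lemma TS_lim (Y : lop R k) (u : nat -> gop R V) L :
  mx_cvg u L -> (forall N, TS Y (u N)) -> TS Y L.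
Proof.
move=> hc h; apply: TS_extE.
have h1 := mx_cvg_lin (ext q Y) (ext q Y) hc.
have h2 : mx_cvg u (ext q Y *m L *m ext q Y).
  by apply: (mx_cvg_ext _ h1) => m; rewrite ext_TS.
exact: (mx_cvg_uniq h2 hc).
Qed.


Lemma proj_is k' (P : proj R k') : is_proj (val P).
Proof. exact: (svalP P). Qed.

Lemma proj_diag (P : lop R k) a : is_proj P ->
  P a a = \sum_r (P r a)^* * P r a.
Proof.
case/andP=> /eqP PP /eqP Ph.
have : (P ^t* *m P) a a = P a a by rewrite Ph PP.
by rewrite mxE => <-; apply: eq_bigr => r _; rewrite !mxE.
Qed.

Lemma nsq_ge0 (x : C) : 0 <= x^* * x.
Proof. by rewrite mulrC mul_conjC_ge0. Qed.

Lemma nsq_eq0 (x : C) : x^* * x = 0 -> x = 0.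
Proof. by move/eqP; rewrite mulrC mul_conjC_eq0 => /eqP. Qed.

Lemma tr_proj0 (P : lop R k) : is_proj P -> \tr P = 0 -> P = 0.
Proof.
move=> hP; rewrite /mxtrace (eq_bigr _ (fun a _ => proj_diag a hP)) => h.
have h1 := @psumr_eq0P _ _ xpredT (fun a => \sum_r (P r a)^* * P r a) (fun a _ => sumr_ge0 _ (fun r _ => nsq_ge0 (P r a))) h.
apply/matrixP=> r a; rewrite mxE; apply: nsq_eq0.
exact: (@psumr_eq0P _ _ xpredT (fun r => (P r a)^* * P r a) (fun r _ => nsq_ge0 (P r a)) (h1 a isT) r isT).
Qed.

Lemma proj_col0 (P : lop R k) : is_proj P -> P (ix0 k) (ix0 k) = 1 ->
  forall i : 'I_(dk k), P *m delta_mx (ix0 k) i = delta_mx (ix0 k) i.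
Proof.
move=> hP h1 i; set a := ix0 k.
have hcol r : r != a -> P r a = 0.
  move=> ra; have := proj_diag a hP; rewrite h1 (bigD1 a) //= h1 conjC1 mul1r.
  move/eqP; rewrite eq_sym -subr_eq0 addrAC subrr add0r => /eqP h.
  exact: nsq_eq0 (@psumr_eq0P _ _ (fun r => r != a) (fun r => (P r a)^* * P r a) (fun r _ => nsq_ge0 (P r a)) h r ra).
rewrite -(mul_delta_mx (0 : 'I_1)) mulmxA -colE.
have -> : col a P = delta_mx a 0.
  apply/matrixP=> r z; rewrite !mxE (ord1 z) eqxx andbT.
  by case: (eqVneq r a) => [->|/hcol ->]; rewrite ?h1.
by rewrite mul_delta_mx.
Qed.

Lemma wp_init_cases (Y : proj R k) :
  val (wp_init Y) = 0 \/ val Y (ix0 k) (ix0 k) = 1.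
Proof.
case: (eqVneq (val Y (ix0 k) (ix0 k)) 1) => [->|ne]; [by right|left].
rewrite /wp_init /ext_empty /eig1 /bra0ket0.
set c := val Y (ix0 k) (ix0 k).
have keq : eigenspace (c%:M : lop R 0)^T 1 = 0.
  apply/eqP; rewrite /eigenspace kermx_eq0 row_free_unit unitmxE tr_scalar_mx.
  have -> : (c%:M : lop R 0) - 1%:M = (c - 1)%:M.
    by apply/matrixP=> x y; rewrite !mxE mulrnBl.
  by rewrite det_scalar unitfE expf_neq0 // subr_eq0.
have E0 : val (proj_of (eigenspace (c%:M : lop R 0)^T 1)) = 0.
  apply: proj_uniq; [exact: proj_is | exact: is_proj0 |].
  by have := proj_ofP (eigenspace (c%:M : lop R 0)^T 1); rewrite keq /colsp trmx0.
rewrite E0 mxE scale0r.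
by rewrite val_asproj // is_proj0.
Qed.

Lemma is_proj_delta : is_proj (delta_mx (ix0 k) (ix0 k) : lop R k).
Proof.
rewrite /is_proj mul_delta_mx eqxx /=; apply/eqP/matrixP=> x y.
by rewrite !mxE conjC_nat andbC.
Qed.

Lemma sp_init_cases (X : proj R k) :
  val X = 0 \/ val (sp_init X) = delta_mx (ix0 k) (ix0 k).
Proof.
case: (eqVneq (\tr (val X)) 0) => [t0|tn].
  by left; apply: tr_proj0 => //; exact: proj_is.
right; rewrite /sp_init /ket0bra0_tensor /supp /ptrace_all.
have E1 : val (proj_of (colsp ((\tr (val X))%:M : lop R 0))) = 1%:M.
  apply: proj_uniq; [exact: proj_is | exact: is_proj1 |].
  apply/eqmxP; apply: eqmx_trans (eqmxP (proj_ofP _)) _.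
  rewrite /colsp tr_scalar_mx trmx1 -[(\tr (val X))%:M]scalemx1; exact: eqmx_scale.
rewrite E1 mxE eqxx mulr1n scale1r.
exact: proj_ofE is_proj_delta.
Qed.

End Main.

Section Tree.
Variable R : realType.
Local Notation C := (R[i]).
Variable V : finType.
Variable k : nat.
Variable q : reg V k.

Inductive tree : proj R k -> proj R k -> prog R V -> Prop :=
| t_top X Y S : psub (ptop R k) Y -> tree X Y S
| t_bot X Y S : psub X (pbot R k) -> tree X Y S
| t_spec X Y X' Y' : psub X X' -> psub Y' Y -> tree X Y (PSpec q X' Y')
| t_skip X Y : psub X Y -> tree X Y (PSkip R V)
| t_abort X Y : tree X Y (PAbort R V)
| t_initw X Y Y' : psub X (wp_init Y') -> psub Y' Y -> tree X Y (PInit R q)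
| t_inits X Y X' : psub X X' -> psub (sp_init X') Y -> tree X Y (PInit R q)
| t_unitw X Y Y' (U : unitary R k) :
    psub X (asproj ((val U) ^t* *m val Y' *m val U)) -> psub Y' Y -> tree X Y (PUnit q U)
| t_units X Y X' (U : unitary R k) :
    psub X X' -> psub (asproj (val U *m val X' *m (val U) ^t*)) Y -> tree X Y (PUnit q U)
| t_assert X Y P : psub (sasaki_conj P X) Y -> tree X Y (PAssert q P)
| t_seq X Y Z S0 S1 : tree X Z S0 -> tree Z Y S1 -> tree X Y (PSeq S0 S1)
| t_choice X Y S0 S1 p : tree X Y S0 -> tree X Y S1 -> tree X Y (PChoice S0 S1 p)
| t_if X Y P X1 X0 S1 S0 : psub (sasaki_conj P X) X1 -> psub (sasaki_conj (pperp P) X) X0 ->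
    tree X1 Y S1 -> tree X0 Y S0 -> tree X Y (PIf q P S1 S0)
| t_while X Y P I X' Sb : psub X I -> psub (sasaki_conj P I) X' ->
    psub (sasaki_conj (pperp P) I) Y -> tree X' I Sb -> tree X Y (PWhile q P Sb).

Lemma psubW (X Y : proj R k) : psub X Y -> val Y *m val X = val X.
Proof. by rewrite psubE => /eqP. Qed.

Lemma psubW' (X Y : proj R k) : psub X Y -> val X *m val Y = val X.
Proof.
move/psubW => h; have [_ Xh] := projvP X; have [_ Yh] := projvP Y.
by rewrite -Xh -Yh -trCmul h.
Qed.

Lemma ext_herm (P : proj R k) : ext q (val P) = ext q ((val P) ^t*).
Proof. by have [_ ->] := projvP P. Qed.

Lemma unitary_mul (U : unitary R k) : val U *m (val U) ^t* = 1%:M.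
Proof. by apply/unitarymxP; exact: (svalP U). Qed.

Lemma unitary_mul' (U : unitary R k) : (val U) ^t* *m val U = 1%:M.
Proof. by apply: mulmx1C; exact: unitary_mul. Qed.

Lemma TS_P (P X Y : proj R k) M : psub (sasaki_conj P X) Y -> TS q (val X) M ->
  TS q (val Y) (ext q (val P) *m M *m ext q (val P)).
Proof.
move=> hc hM; rewrite {2}ext_herm; apply: TS_K hM.
by rewrite -mulmxA conj_fix.
Qed.

Lemma tree_sound X Y S : tree X Y S ->
  forall E, den S E -> forall rho, TS q (val X) rho -> TS q (val Y) (E rho).
Proof.
elim=> {X Y S}.
- move=> X Y S /psub_top hY E _ rho _ s u; by rewrite hY mul1mx mulmx1.
- move=> X Y S /psub_bot hX E hE rho h.
  have -> : rho = 0.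
    apply: (@blk_inj _ _ _ q) => s u; by rewrite blk0 -h hX !mul0mx.
  by rewrite (den_zero hE); exact: TS0.
- move=> X Y X' Y' hXX' hYY' E [E0 [cp _ prop ->]] rho h.
  apply: (TS_mono hYY') => s u; rewrite blk_ext_so.
  apply: (good_all (proj_is X') (proj_is Y') cp prop).
  exact: (TS_mono hXX' h).
- by move=> X Y hXY E /= -> rho h; exact: TS_mono hXY h.
- by move=> X Y E /= -> rho _; exact: TS0.
- move=> X Y Y' hX hY' E /= -> rho h.
  apply: TS_sum => i; rewrite (_ : delta_mx i (ix0 k) = (delta_mx (ix0 k) i) ^t*); last first.
    by apply/matrixP=> x y; rewrite !mxE conjC_nat andbC.
  apply: TS_K h.
  case: (wp_init_cases Y') => [W0|W1].
    by move: (psubW hX); rewrite W0 mul0mx => <-; rewrite !mulmx0.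
  have e := proj_col0 (proj_is Y') W1 i.
  have hd : val Y *m delta_mx (ix0 k) i = delta_mx (ix0 k) i.
    by rewrite -{1}e mulmxA (psubW hY') e.
  by rewrite hd.
- move=> X Y X' hX hsp E /= -> rho h.
  apply: TS_sum => i; rewrite (_ : delta_mx i (ix0 k) = (delta_mx (ix0 k) i) ^t*); last first.
    by apply/matrixP=> x y; rewrite !mxE conjC_nat andbC.
  apply: TS_K h.
  case: (sp_init_cases X') => [X0|Xd].
    by move: (psubW hX); rewrite X0 mul0mx => <-; rewrite !mulmx0.
  have := psubW hsp; rewrite Xd => hYd.
  by rewrite -(mul_delta_mx (ix0 k)) !mulmxA hYd.
- move=> X Y Y' U hX hY E /= -> rho h.
  rewrite ext_adj; apply: TS_K h.
  set W := (val U) ^t* *m val Y' *m val U.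
  have hWp : is_proj W.
    rewrite /is_proj /W; apply/andP; split; apply/eqP.
      rewrite !mulmxA -(mulmxA _ (val U)) unitary_mul mulmx1 -(mulmxA _ (val Y')).
      by case: (projvP Y') => YY _; rewrite -!mulmxA (mulmxA (val Y')) YY.
    by rewrite !trCmul trmxCK; case: (projvP Y') => _ ->; rewrite mulmxA.
  have hWX := psubW hX; rewrite val_asproj // -/W in hWX.
  have hUW : val U *m W = val Y' *m val U by rewrite /W !mulmxA unitary_mul mul1mx.
  by rewrite -hWX !mulmxA -(mulmxA (val Y)) unitary_mul mulmx1 mul1mx (psubW hY).
- move=> X Y X' U hX hY E /= -> rho h.
  rewrite ext_adj; apply: TS_K h.
  set W := val U *m val X' *m (val U) ^t*.
  have hWp : is_proj W.
    rewrite /is_proj /W; apply/andP; split; apply/eqP.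
      rewrite !mulmxA -(mulmxA _ ((val U) ^t*)) unitary_mul' mulmx1 -(mulmxA _ (val X')).
      by case: (projvP X') => XX _; rewrite -!mulmxA (mulmxA (val X')) XX.
    by rewrite !trCmul trmxCK; case: (projvP X') => _ ->; rewrite mulmxA.
  have hYW := psubW hY; rewrite val_asproj // -/W in hYW.
  have hUX' : val U *m val X' = W *m val U by rewrite /W -mulmxA unitary_mul' mulmx1.
  have e : val U *m val X = W *m (val U *m val X).
    by rewrite mulmxA -hUX' -mulmxA (psubW hX).
  by rewrite -mulmxA e mulmxA hYW.
- move=> X Y P hc E /= -> rho h.
  exact: TS_P hc h.
- move=> X Y Z S0 S1 _ IH0 _ IH1 E /= [E0 [E1 [h0 h1 ->]]] rho h.
  exact: IH1 _ h1 _ (IH0 _ h0 _ h).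
- move=> X Y S0 S1 p _ IH0 _ IH1 E /= [E0 [E1 [h0 h1 ->]]] rho h.
  by apply: TSD; apply: TSZ; [exact: IH0 | exact: IH1].
- move=> X Y P X1 X0 S1 S0 c1 c0 _ IH1 _ IH0 E /= [E1 [E0 [h1 h0 ->]]] rho h.
  apply: TSD; [apply: IH1 h1 _ _ | apply: IH0 h0 _ _].
    exact: TS_P c1 h.
  exact: TS_P c0 h.
- move=> X Y P I X' Sb hXI c1 c0 _ IH E /= [Es [hEs hcvg]] rho h.
  have inv n : TS q (val I) (while_pref (fun X0 => ext q (val P) *m X0 *m ext q (val P)) Es n rho).
    elim: n => [|n IHn] /=; first exact: TS_mono hXI h.
    apply: IH (hEs n) _ _.
    exact: TS_P c1 IHn.
  apply: (TS_lim (hcvg rho)) => N.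
  apply: TS_sum => n.
  exact: TS_P c0 (inv n).
Qed.

End Tree.




Ltac inv H := inversion H; subst; repeat match goal with
 | [ h : existT _ _ _ = existT _ _ _ |- _ ] =>
     apply Eqdep_dec.inj_pair2_eq_dec in h; [subst | exact PeanoNat.Nat.eq_dec] end.

Lemma spec_inv (R : realType) (V : finType) k (q : reg V k) k' (q' : reg V k')
  (X Y : proj R k) (P Q : proj R k') :
  tree q X Y (PSpec q' P Q) ->
  psub (ptop R k) Y \/ psub X (pbot R k) \/
  (exists e : k' = k, psub X (eq_rect _ _ P _ e) /\ psub (eq_rect _ _ Q _ e) Y /\ q = eq_rect _ _ q' _ e).
Proof.
move=> hT; inv hT.
- by left.
- by right; left.
- right; right; exists erefl; auto.
Qed.

Section Pres.
Variable R : realType.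
Variable V : finType.
Variable k : nat.
Variable q : reg V k.

Lemma psub_bot_any (Z : proj R k) : psub (pbot R k) Z.
Proof. by rewrite psubE val_pbot mulmx0. Qed.

Lemma val0_psub (X : proj R k) : val X = 0 -> psub X (pbot R k).
Proof. by move=> h; rewrite psubE val_pbot h mulmx0. Qed.

End Pres.

Lemma spec_inv_same (R : realType) (V : finType) k (q : reg V k) (X Y P' Q' : proj R k) :
  tree q X Y (PSpec q P' Q') ->
  psub (ptop R k) Y \/ psub X (pbot R k) \/ (psub X P' /\ psub Q' Y).
Proof.
move=> hT; inv hT.
- by left.
- by right; left.
- by right; right; split.
Qed.

Ltac sub2 := apply: psub_trans; [eassumption | first [eassumption | (apply: psub_trans; [eassumption | exact: psub_bot_any])]].
Ltac triv := first [ (apply: t_top; assumption) | (apply: t_bot; assumption) ].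

Lemma tree_pres (R : realType) (V : finType) k (q : reg V k) L (S0 S1 : prog R V) :
  derives L S0 S1 -> forall X Y, tree q X Y S0 -> tree q X Y S1.
Proof.
elim=> {L S0 S1}.
- by [].
- by move=> L S0 S1 S2 _ IH1 _ IH2 X Y /IH1 /IH2.
- move=> L S0 S1 T0 T1 _ IH0 _ IH1 X Y hT; inv hT; try triv.
  by apply: t_seq; [apply: IH0; eassumption | apply: IH1; eassumption].
- move=> L S0 S1 T0 T1 p _ IH0 _ IH1 X Y hT; inv hT; try triv.
  by apply: t_choice; [apply: IH0 | apply: IH1].
- move=> L k' q' P S0 S1 T0 T1 _ IH0 _ IH1 X Y hT; inv hT; try triv.
  by apply: t_if; [eassumption | eassumption | apply: IH1 | apply: IH0].
- move=> L k' q' P Sb T _ IH X Y hT; inv hT; try triv.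
  by apply: t_while; [eassumption | eassumption | eassumption | apply: IH].
-
  by move=> L k' q' Q S X Y hT; inv hT; try triv.
-
  by move=> L k' q' P S X Y hT; inv hT; try triv.
- by move=> *; apply: t_abort.
-
  move=> L k' q' P X Y hT; inv hT; try triv.
  by apply: t_skip; apply: psub_trans; eassumption.
-
  move=> L k' q' P Q R0 T hPR hTQ X Y hT; inv hT; try triv.
  by apply: t_spec; apply: psub_trans; eassumption.
-
  move=> L k' q' P Q R0 X Y hT; inv hT; try triv.
  by apply: t_seq; apply: t_spec; try eassumption; exact: psub_refl.
-
  move=> k' q' Q X Y hT; inv hT; try triv.
  by apply: t_initw; eassumption.
-
  move=> k' q' U Q X Y hT; inv hT; try triv.
  by apply: t_unitw; eassumption.
-
  move=> k' q' P Q X Y hT; inv hT; try triv.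
  apply: t_assert; apply: psub_trans; last eassumption.
  by apply: conj_of_imp.
-
  move=> k' q' P P1 P2 Q p _ -> X Y hT; inv hT; try triv.
  match goal with h : is_true (psub X (pmeet P1 P2)) |- _ => move: h; rewrite psub_meet => /andP[h1 h2] end.
  by apply: t_choice; apply: t_spec.
-
  move=> k' q' P P1 P2 Q p _ -> X Y hT; inv hT; try triv.
  match goal with h0 : tree _ _ _ (PSpec _ P1 Q), h1 : tree _ _ _ (PSpec _ P2 Q) |- _ =>
    inv h0; try triv; inv h1; try triv end.
  by apply: t_spec => //; rewrite psub_meet; apply/andP.
-
  move=> k' q' P P1 P0 Q X Y hT; inv hT; try triv.
  match goal with h : is_true (psub X (pmeet _ _)) |- _ => move: h; rewrite psub_meet => /andP[h1 h2] end.
  apply: t_if; [exact: conj_of_imp h1 | exact: conj_of_imp h2 | |]; apply: t_spec => //; exact: psub_refl.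
-
  move=> k' q' P P1 P0 Q X Y hT; inv hT; try triv.
  match goal with
  | c1 : is_true (psub (sasaki_conj P X) ?X1), c0 : is_true (psub (sasaki_conj (pperp P) X) ?X0),
    h1 : tree _ ?X1 _ (PSpec _ P1 Q), h0 : tree _ ?X0 _ (PSpec _ P0 Q) |- _ =>
    move: c1 c0 h1 h0
  end.
  move=> c1 c0 /spec_inv_same [t1|[b1|[s1 s1']]] /spec_inv_same [t0|[b0|[s0 s0']]];
    try exact: t_top.
  + by apply: t_bot; apply: val0_psub; apply: conj_bot; [exact: psub_trans c1 b1 | exact: psub_trans c0 b0].
  + apply: t_spec => //; rewrite psub_meet; apply/andP; split; apply: imp_of_conj.
      exact: psub_trans c1 (psub_trans b1 (psub_bot_any _)).
    exact: psub_trans c0 s0.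
  + apply: t_spec => //; rewrite psub_meet; apply/andP; split; apply: imp_of_conj.
      exact: psub_trans c1 s1.
    exact: psub_trans c0 (psub_trans b0 (psub_bot_any _)).
  + apply: t_spec => //; rewrite psub_meet; apply/andP; split; apply: imp_of_conj.
      exact: psub_trans c1 s1.
    exact: psub_trans c0 s0.
-
  move=> k' q' P Q R0 X Y hT; inv hT; try triv.
  match goal with h : is_true (psub X (pmeet _ _)) |- _ => have hJ := h end.
  apply: t_while; [exact: hJ | | | apply: t_spec; exact: psub_refl].
    apply: conj_of_imp; move: (psub_refl (pmeet (sasaki_imp P Q) (sasaki_imp (pperp P) R0))).
    by rewrite psub_meet => /andP[].
  apply: psub_trans; last eassumption.
  apply: conj_of_imp; move: (psub_refl (pmeet (sasaki_imp P Q) (sasaki_imp (pperp P) R0))).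
  by rewrite psub_meet => /andP[].
-
  move=> k' q' P X Y hT; inv hT; try triv.
  by apply: t_inits; eassumption.
-
  move=> k' q' U P X Y hT; inv hT; try triv.
  by apply: t_units; eassumption.
-
  move=> k' q' P Q X Y hT; inv hT; try triv.
  apply: t_assert; apply: psub_trans; last eassumption.
  by apply: conj_mono.
-
  move=> k' q' P Q Q1 Q2 p _ <- X Y hT; inv hT; try triv.
  match goal with h : is_true (psub (pjoin Q1 Q2) Y) |- _ => move: h; rewrite psub_join => /andP[h1 h2] end.
  by apply: t_choice; apply: t_spec.
-
  move=> k' q' P Q Q1 Q2 p _ <- X Y hT; inv hT; try triv.
  match goal with h0 : tree _ _ _ (PSpec _ P Q1), h1 : tree _ _ _ (PSpec _ P Q2) |- _ =>
    inv h0; try triv; inv h1; try triv end.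
  by apply: t_spec => //; rewrite psub_join; apply/andP.
-
  move=> k' q' P Q R0 X Y hT; inv hT; try triv.
  by apply: t_if; [apply: conj_mono; eassumption | apply: conj_mono; eassumption | |];
    apply: t_spec; try eassumption; exact: psub_refl.
-
  move=> k' q' P Inv X Y hT; inv hT; try triv.
  by apply: t_while; [eassumption | exact: psub_refl | eassumption | apply: t_spec; exact: psub_refl].
Qed.

Unset Implicit Arguments.

Theorem theorem4p4 (R : realType) (V : finType) (k : nat) (q : reg V k)
    (P Q : proj R k) (S : prog R V) :
  derives Wpc (PSpec q P Q) S \/ derives Spc (PSpec q P Q) S ->
  hoare_valid (ext q (val P)) S (ext q (val Q)).
Proof.
move=> hd.
have hT : tree q P Q S.
  have h0 : tree q P Q (PSpec q P Q) by apply: t_spec; exact: psub_refl.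
  by case: hd => hd; exact: (tree_pres hd h0).
move=> rho E [hpsd _] hE hsat.
have [PP Ph] := projvP P.
have eP : ext q (val P) *m ext q (val P) = ext q (val P) by rewrite ext_mul PP.
have h1 : ext q (val P) *m rho = rho by apply/eqP; rewrite -sub_colspP.
have rh : rho ^t* = rho := psd_herm hpsd.
have h2 : rho *m ext q (val P) = rho.
  by have := congr1 (fun M => M ^t*) h1; rewrite trCmul rh ext_adj Ph.
have hTS : TS q (val P) rho by apply: TS_extE; rewrite h1 h2.
have hQ := ext_TS (tree_sound hT hE hTS).
have [QQ _] := projvP Q.
rewrite /sat sub_colspP; last by rewrite ext_mul QQ.
by apply/eqP; rewrite -hQ !mulmxA ext_mul QQ.
Qed.
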